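(* Let $\mathcal R\subset\mathbb Z^k$ be a polyhedral region and let $n$ be a positive integer. Then $\mathcal R$ can be written as the union of a set of measure zero and a polyhedral region $\mathcal R'$ such that every $\vec z\in\mathcal R'$ lies in a $k$-dimensional box of size $n$ contained entirely in $\mathcal R$.
   Context: A half-space is $\{\vec z\in\mathbb Z^k:\vec v\cdot\vec z>m\}$ with $\vec v\in\mathbb Z^k$, $m\in\mathbb Z$; a polyhedral region is $\mathbb Z^k$ or an intersection of finitely many half-spaces. A hyperplane is $\{\vec z\in\mathbb Z^k:\vec v\cdot\vec z=m\}$ with $\vec v\in\mathbb Z^k\setminus\{0\}$, $m\in\mathbb Z$; a set of measure zero is a subset of $\mathbb Z^k$ covered by finitely many hyperplanes. A $k$-dimensional box of size $n$ is $\{\vec z\in\mathbb Z^k: c_i\le z_i\le c_i+n,\ i=1,\dots,k\}$ for some $c_i\in\mathbb Z$. *)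

(* Defs.v *)
From mathcomp Require Import all_boot all_order all_algebra.
Set Implicit Arguments. Unset Strict Implicit. Unset Printing Implicit Defensive.
Import Order.TTheory GRing.Theory Num.Theory.
Local Open Scope ring_scope.

Definition vec (k : nat) := {ffun 'I_k -> int}.

Definition dot (k : nat) (v z : vec k) : int := \sum_(i < k) v i * z i.

Definition halfspace (k : nat) (v : vec k) (m : int) : vec k -> Prop :=
  fun z => m < dot v z.

Definition polyhedral (k : nat) (R : vec k -> Prop) : Prop :=
  (forall z, R z) \/
  exists hs : seq (vec k * int),
    forall z, R z <-> all (fun h => h.2 < dot h.1 z) hs.

Definition hyperplane (k : nat) (v : vec k) (m : int) : vec k -> Prop :=
  fun z => dot v z = m.

Definition measure_zero (k : nat) (S : vec k -> Prop) : Prop :=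
  exists hs : seq (vec k * int),
    (forall h, h \in hs -> h.1 != 0) /\
    forall z, S z -> exists2 h, h \in hs & hyperplane h.1 h.2 z.

Definition box (k : nat) (c : vec k) (n : nat) : vec k -> Prop :=
  fun z => forall i : 'I_k, c i <= z i <= c i + n%:Z.

(* Main.v *)
Require Import Defs.
From mathcomp Require Import all_boot all_order all_algebra.
From mathcomp Require Import zify.
Import Order.TTheory GRing.Theory Num.Theory.
Local Open Scope ring_scope.

Definition Ni {k : nat} (n : nat) (v : vec k) : int := n%:Z * \sum_(i < k) `|v i|.

Lemma Ni_ge0 {k} n (v : vec k) : 0 <= Ni n v.
Proof. by rewrite /Ni mulr_ge0 // sumr_ge0. Qed.

Lemma dot_shift {k} (v z w : vec k) :
  dot v w = dot v z + \sum_(i < k) v i * (w i - z i).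
Proof.
rewrite /dot -big_split /=; apply: eq_bigr => i _.
by rewrite -mulrDr addrC subrK.
Qed.

Lemma lowb (n : nat) (v d : int) : 0 <= d <= n%:Z -> -(n%:Z * `|v|) <= v * d.
Proof. move: d => d; case: (ger0P v) => hv; nia. Qed.

Lemma box_bound {k n} (v : vec k) {z w : vec k} :
  box z n w -> dot v z - Ni n v <= dot v w.
Proof.
move=> hb; rewrite (dot_shift v z w) lerD2l /Ni mulr_sumr -sumrN.
apply: ler_sum => i _; apply: lowb.
have := hb i; move: (w i) (z i) => a b; lia.
Qed.

Lemma Ni0 {k} n : Ni n (0 : vec k) = 0.
Proof. by rewrite /Ni big1 ?mulr0 // => i _; rewrite ffunE. Qed.

Lemma dot0 {k} (z : vec k) : dot 0 z = 0.
Proof. by rewrite /dot big1 // => i _; rewrite ffunE mul0r. Qed.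

Theorem mainTheorem19 (k : nat) (R : vec k -> Prop) (n : nat) :
  polyhedral R -> (0 < n)%N ->
  exists (Z R' : vec k -> Prop),
    measure_zero Z /\ polyhedral R' /\
    (forall z, R z <-> (Z z \/ R' z)) /\
    (forall z, R' z ->
       exists c : vec k, box c n z /\ (forall w, box c n w -> R w)).
Proof.
move=> [hall|[hs hR]] hn.
  exists (fun _ => False), R; split; [|split; [by left|split]].
  - by exists [::]; split => // z [].
  - by move=> z; split; [right|case].
  - move=> z _; exists z; split; last by move=> w _; apply: hall.
    by move=> i; rewrite lexx /= lerDl.
pose R' := fun z : vec k => all (fun h => h.2 + Ni n h.1 < dot h.1 z) hs.
have R'R : forall z, R' z -> R z.
  move=> z hz; apply/hR; apply/allP => h hh.
  have := allP hz h hh; have := Ni_ge0 n h.1.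
  move: (Ni n h.1) (dot h.1 z) (h.2) => a b c; lia.
exists (fun z => R z /\ ~ R' z), R'; split; [|split; [|split]].
- exists [seq (h.1, h.2 + t%:Z) | h <- [seq h <- hs | h.1 != 0],
                                  t <- iota 1 `|Ni n h.1|%N]; split.
  + move=> h' /allpairsPdep [h [t [hin _ ->]]] /=.
    by move: hin; rewrite mem_filter => /andP [].
  + move=> z [/hR hz /negP /allPn [h hh hn']].
    have hm := allP hz h hh; move: hn' hm => /= hn' hm.
    have hv : h.1 != 0.
      apply/eqP => e; move: hn' hm; rewrite e Ni0 dot0; lia.
    exists (h.1, h.2 + (`|dot h.1 z - h.2|%N)%:Z).
      apply/allpairsPdep; exists h, `|dot h.1 z - h.2|%N; split => //=.
        by rewrite mem_filter hv hh.
      rewrite mem_iota; have := Ni_ge0 n h.1.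
      move: hn' hm; move: (Ni n h.1) (dot h.1 z) (h.2) => a b c; lia.
    rewrite /hyperplane /=; move: hm; move: (dot h.1 z) (h.2) => b c; lia.
- right; exists [seq (h.1, h.2 + Ni n h.1) | h <- hs] => z.
  by rewrite all_map.
- move=> z; split.
    by move=> hz; case: (boolP (R' z)) => h; [right|left; split => //; apply/negP].
  by case=> [[]|/R'R].
- move=> z hz; exists z; split.
    by move=> i; rewrite lexx /= lerDl.
  move=> w hb; apply/hR; apply/allP => h hh.
  have := allP hz h hh; have := box_bound h.1 hb.
  move: (Ni n h.1) (dot h.1 z) (dot h.1 w) (h.2) => a b c d; lia.
Qed.
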